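(* Let $a,b,c,x,y\in X$ with $a\ge b$, $a\ne b$, $x\ge c$, $x\ne c$, $y\ge c$, $y\ne c$, and $x\ne y$. Then $\tau_{a,b}\,\tau_{[x,y],c}\,\tau_{a,b}^{-1}\in K_{\{a,b,c,x,y\}}$.
   Context: $\Gamma$ is a finite simplicial graph with vertex set $X$, $A_\Gamma$ its right-angled Artin group ($x,y\in X$ commute iff adjacent). $L=X\cup X^{-1}$; for $u\in L$, $\bar u\in X$ is the vertex with $u\in\{\bar u,\bar u^{-1}\}$. $\mathrm{lk}(v)$ is the set of neighbours of $v$, $\mathrm{st}(v)=\mathrm{lk}(v)\cup\{v\}$. Domination: $v\ge w$ iff $\mathrm{lk}(w)\subset\mathrm{st}(v)$; for letters, $u\ge u'$ iff $\bar u\ge\bar u'$. For $u,v\in L$ with $u\ge v$, $\bar u\ne\bar v$, the transvection $\tau_{u,v}$ sends $v\mapsto vu$ and fixes all generators other than $\bar v$. For $u\ge v$, $\bar u\ne\bar v$, $c_{u,\{v\}}$ sends $v\mapsto u^{-1}vu$ and fixes all other generators. For $x,y,c\in L$ with $x,y\ge c$ and $\bar x,\bar y,\bar c$ distinct, $\tau_{[x,y],c}$ sends $c\mapsto c[x,y]$ (with $[x,y]=xyx^{-1}y^{-1}$) and fixes all generators other than $\bar c$. For $Z\subset X$, $K_Z\le\mathrm{Aut}\,A_\Gamma$ is generated by all $\tau_{[x,y],c}$ and all $c_{x,\{c\}}$ with $x,y,c\in Z$ and $x,y\ge c$ (distinct where required), together with all inner automorphisms. *)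

(* Defs.v *)
(* Right-angled Artin groups via words modulo the RAAG congruence;
   automorphisms represented by the images of generators (substitutions),
   considered up to pointwise equality in A_Gamma. *)
From mathcomp Require Import all_boot.
Set Implicit Arguments. Unset Strict Implicit. Unset Printing Implicit Defensive.

Section RAAG.
Variable X : finType.
Variable adj : rel X.

(* a letter (v, false) is the generator v, (v, true) is v^{-1}; l.1 is \bar l *)
Definition letter := (X * bool)%type.
Definition word := seq letter.
Definition linv (l : letter) : letter := (l.1, ~~ l.2).
Definition winv (w : word) : word := rev (map linv w).

Inductive weq : word -> word -> Prop :=
| weq_refl w : weq w w
| weq_sym w1 w2 : weq w1 w2 -> weq w2 w1
| weq_trans w1 w2 w3 : weq w1 w2 -> weq w2 w3 -> weq w1 w3
| weq_cancel u l v : weq (u ++ l :: linv l :: v) (u ++ v)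
| weq_comm u l1 l2 v : adj l1.1 l2.1 -> weq (u ++ l1 :: l2 :: v) (u ++ l2 :: l1 :: v).

Definition endo := X -> word.
Definition subst (f : endo) (w : word) : word :=
  flatten (map (fun l : letter => if l.2 then winv (f l.1) else f l.1) w).
Definition eeq (f g : endo) : Prop := forall z, weq (f z) (g z).
Definition ecomp (f g : endo) : endo := fun z => subst f (g z).
Definition idE : endo := fun z => [:: (z, false)].
Definition is_inv (f g : endo) : Prop := eeq (ecomp f g) idE /\ eeq (ecomp g f) idE.

Inductive gen (S : endo -> Prop) : endo -> Prop :=
| gen_base f : S f -> gen S f
| gen_id : gen S idE
| gen_comp f g : gen S f -> gen S g -> gen S (ecomp f g)
| gen_inv f g : gen S f -> is_inv f g -> gen S g
| gen_eeq f g : gen S f -> eeq f g -> gen S g.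

Definition lk (v : X) : {set X} := [set z | adj v z].
Definition st (v : X) : {set X} := v |: lk v.
Definition dom (v w : X) : bool := lk w \subset st v.

Definition letter_map (v : letter) (w : word) : endo :=
  fun z => if z == v.1 then (if v.2 then winv w else w) else idE z.

Definition transv (u v : letter) : endo := letter_map v [:: v; u].
Definition pconj (u v : letter) : endo := letter_map v [:: linv u; v; u].
Definition ctransv (x y c : letter) : endo :=
  letter_map c [:: c; x; y; linv x; linv y].
Definition inner (g : word) : endo := fun z => winv g ++ (z, false) :: g.

Definition K_gens (Z : {set X}) (f : endo) : Prop :=
  (exists x y c : X, [/\ [&& x \in Z, y \in Z & c \in Z], dom x c && dom y c,
      [&& x != y, x != c & y != c] & f = ctransv (x, false) (y, false) (c, false)])
  \/ (exists x c : X, [/\ x \in Z, c \in Z, dom x c, x != c &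
      f = pconj (x, false) (c, false)])
  \/ (exists g : word, f = inner g).

Definition K (Z : {set X}) : endo -> Prop := gen (K_gens Z).

End RAAG.

(* Main.v *)
Require Import Defs.
From mathcomp Require Import all_boot.
Set Implicit Arguments. Unset Strict Implicit. Unset Printing Implicit Defensive.

Section Lib.
Variable X : finType.
Variable adj : rel X.
Hypothesis adj_sym : symmetric adj.
Hypothesis adj_irr : irreflexive adj.

Local Notation weq := (weq adj).

Lemma weq_ctx p u v q : weq u v -> weq (p ++ u ++ q) (p ++ v ++ q).
Proof.
elim=> {u v} [w|w1 w2 _ IH|w1 w2 w3 _ IH1 _ IH2|u l v|u l1 l2 v H].
- exact: weq_refl.
- exact: weq_sym.
- exact: weq_trans IH2.
- have := weq_cancel adj (p ++ u) l (v ++ q). by rewrite -!catA.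
- have := @weq_comm _ adj (p ++ u) l1 l2 (v ++ q) H. by rewrite -!catA.
Qed.

Lemma weq_cat u u' v v' : weq u v -> weq u' v' -> weq (u ++ u') (v ++ v').
Proof.
move=> H1 H2; apply: weq_trans (_ : weq (v ++ u') _).
  by have := weq_ctx [::] u' H1; rewrite /=.
by have := weq_ctx v [::] H2; rewrite !cats0.
Qed.

Lemma weq_cons l u v : weq u v -> weq (l :: u) (l :: v).
Proof. by move=> H; exact: (weq_cat (weq_refl adj [:: l]) H). Qed.

Lemma linvK : involutive (@linv X).
Proof. by case=> v b; rewrite /linv /= negbK. Qed.

Lemma winv_cat (u v : word X) : winv (u ++ v) = winv v ++ winv u.
Proof. by rewrite /winv map_cat rev_cat. Qed.

Lemma winvK : involutive (@winv X).
Proof. by move=> w; rewrite /winv map_rev revK -map_comp (eq_map linvK) map_id. Qed.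

Lemma winv_cons (l : letter X) (w : word X) : winv (l :: w) = winv w ++ [:: linv l].
Proof. by rewrite -cat1s winv_cat. Qed.

Lemma weq_winv u v : weq u v -> weq (winv u) (winv v).
Proof.
elim=> {u v} [w|w1 w2 _ IH|w1 w2 w3 _ IH1 _ IH2|u l v|u l1 l2 v H].
- exact: weq_refl.
- exact: weq_sym.
- exact: weq_trans IH2.
- rewrite !winv_cat !winv_cons /= -?catA /= linvK.
  have := weq_cancel adj (winv v) l (winv u). by rewrite -?catA.
- rewrite !winv_cat !winv_cons /= -?catA /=.
  apply: weq_comm. by rewrite adj_sym.
Qed.

Lemma weq_inv_r w : weq (w ++ winv w) [::].
Proof.
elim: w => [|l w IH] /=; first exact: weq_refl.
rewrite winv_cons catA -cat_cons -/(cat (l :: (w ++ winv w)) [:: linv l]).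
apply: weq_trans (_ : weq ([:: l] ++ [::] ++ [:: linv l]) _).
  have := weq_ctx [:: l] [:: linv l] IH. by rewrite /= -catA.
have := weq_cancel adj [::] l [::]. by [].
Qed.

Lemma weq_inv_l w : weq (winv w ++ w) [::].
Proof. by have := weq_inv_r (winv w); rewrite winvK. Qed.

Definition cancels (l m : letter X) := (if l.2 then ~~ m.2 else m.2) && (l.1 == m.1).
Definition rstep (l : letter X) (s : word X) :=
  if s is m :: s' then (if cancels l m then s' else l :: m :: s') else [:: l].
Fixpoint red (w : word X) : word X :=
  if w is l :: w' then rstep l (red w') else [::].

Lemma weq_red w : weq w (red w).
Proof.
elim: w => [|l w IH] /=; first exact: weq_refl.
apply: (weq_trans (weq_cons l IH)).
case: (red w) => [|m s] /=; first exact: weq_refl.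
rewrite /cancels; case: ifP => [/andP[H1 /eqP H2]|_]; last exact: weq_refl.
have -> : m = linv l.
  by case: l m H1 H2 => v b [v' b'] /=; case: b; case: b' => // _ ->.
exact: (weq_cancel adj [::] l s).
Qed.

Lemma red_eq u v : red u = red v -> weq u v.
Proof. move=> H; apply: weq_trans (weq_red u) _; rewrite H; apply: weq_sym; exact: weq_red. Qed.

Definition okv (u v : word X) :=
  all (fun l : letter X => all (fun m : letter X => adj l.1 m.1 || (l.1 == m.1)) v) u.

Lemma comm_letters (l m : letter X) : adj l.1 m.1 || (l.1 == m.1) ->
  weq [:: l; m] [:: m; l].
Proof.
case/orP=> [H|/eqP H].
  exact: (weq_comm [::] [::] H).
case: l m H => v b [v' b'] /= ->.
case: (eqVneq b b') => [->|nb]; first exact: weq_refl.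
apply: weq_trans (_ : weq [::] _).
  have -> : (v', b') = linv (v', b) by rewrite /linv /=; case: b b' nb => [] [].
  exact: (weq_cancel adj [::] (v',b) [::]).
apply: weq_sym.
have -> : (v', b) = linv (v', b') by rewrite /linv /=; case: b b' nb => [] [].
exact: (weq_cancel adj [::] (v',b') [::]).
Qed.

Lemma comm_letter_word (l : letter X) v :
  all (fun m : letter X => adj l.1 m.1 || (l.1 == m.1)) v -> weq (l :: v) (v ++ [:: l]).
Proof.
elim: v => [|m v IH] /=; first by move=> _; exact: weq_refl.
case/andP=> H1 H2.
apply: weq_trans (_ : weq (m :: l :: v) _).
  have := weq_ctx [::] v (comm_letters H1). by [].
exact: weq_cons (IH H2).
Qed.

Lemma okv_comm u v : okv u v -> weq (u ++ v) (v ++ u).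
Proof.
elim: u => [|l u IH] /=; first by move=> _; rewrite cats0; exact: weq_refl.
case/andP=> H1 H2.
apply: weq_trans (_ : weq (l :: v ++ u) _).
  exact: weq_cons (IH H2).
have := weq_ctx [::] u (comm_letter_word H1).
by rewrite /= -catA.
Qed.

Lemma okv_winvl u v : okv u v -> okv (winv u) v.
Proof.
rewrite /okv /winv all_rev all_map. apply: sub_all => l /=. by case: l.
Qed.

Lemma okv_sym u v : okv u v -> okv v u.
Proof.
move=> H; apply/allP => m mv; apply/allP => l lu.
have := allP (allP H l lu) m mv. by rewrite adj_sym eq_sym.
Qed.

Lemma okv_winvr u v : okv u v -> okv u (winv v).
Proof. by move=> /okv_sym /okv_winvl /okv_sym. Qed.

Definition img (f : endo X) (l : letter X) := if l.2 then winv (f l.1) else f l.1.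

Lemma subst_cons (f : endo X) (l : letter X) (w : word X) : subst f (l :: w) = img f l ++ subst f w.
Proof. by []. Qed.

Lemma subst_cat (f : endo X) (u v : word X) : subst f (u ++ v) = subst f u ++ subst f v.
Proof. by rewrite /subst map_cat flatten_cat. Qed.

Lemma subst_winv (f : endo X) (w : word X) : subst f (winv w) = winv (subst f w).
Proof.
elim: w => [|l w IH] //.
rewrite winv_cons subst_cat IH subst_cons winv_cat; congr (_ ++ _).
rewrite /subst /= cats0 /img; case: l => v [] /=; by rewrite ?winvK.
Qed.

Definition homv (f : endo X) := forall p q, adj p q -> okv (f p) (f q).

Lemma weq_subst (f : endo X) (u v : word X) : homv f -> weq u v -> weq (subst f u) (subst f v).
Proof.
move=> Hf; elim=> {u v} [w|w1 w2 _ IH|w1 w2 w3 _ IH1 _ IH2|u l v|u l1 l2 v H].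
- exact: weq_refl.
- exact: weq_sym.
- exact: weq_trans IH2.
- rewrite !subst_cat !subst_cons.
  have H : weq (img f l ++ img f (linv l)) [::].
    rewrite /img; case: l => v' [] /=; rewrite ?winvK; [exact: weq_inv_l | exact: weq_inv_r].
  have := weq_ctx (subst f u) (subst f v) H. by rewrite -!catA.
- rewrite !subst_cat !subst_cons.
  have H2 : weq (img f l1 ++ img f l2) (img f l2 ++ img f l1).
    apply: okv_comm. have := Hf _ _ H.
    rewrite /img; case: l1 H => v1 [] /=; case: l2 => v2 [] /= _ Hk.
    + exact: okv_winvl (okv_winvr Hk).
    + exact: okv_winvl Hk.
    + exact: okv_winvr Hk.
    + exact: Hk.
  have := weq_ctx (subst f u) (subst f v) H2. by rewrite -!catA.
Qed.

Lemma subst_comp (f g : endo X) (w : word X) : subst (ecomp f g) w = subst f (subst g w).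
Proof.
elim: w => [|l w IH] //.
rewrite !subst_cons subst_cat IH; congr (_ ++ _).
rewrite /img /ecomp; case: l => v [] //=. by rewrite subst_winv.
Qed.

Lemma subst_id w : subst (@idE X) w = w.
Proof. elim: w => [|[v b] w IH] //; rewrite subst_cons IH; by case: b. Qed.

Lemma subst_eeq (f g : endo X) (w : word X) : eeq adj f g -> weq (subst f w) (subst g w).
Proof.
move=> H; elim: w => [|l w IH]; first exact: weq_refl.
rewrite !subst_cons; apply: weq_cat IH.
rewrite /img; case: l.2; last exact: H. exact: weq_winv.
Qed.

Lemma subst1 (f : endo X) (z : X) : subst f [:: (z, false)] = f z.
Proof. by rewrite /subst /= cats0. Qed.



Lemma eeq_trans f g h : eeq adj f g -> eeq adj g h -> eeq adj f h.
Proof. move=> H1 H2 z; exact: weq_trans (H1 z) (H2 z). Qed.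
Lemma eeq_sym f g : eeq adj f g -> eeq adj g f.
Proof. move=> H z; exact: weq_sym. Qed.

Lemma domP v w q : dom adj v w -> adj w q -> adj v q || (v == q).
Proof.
move=> /subsetP /(_ q) H aq; have := H; rewrite /st !inE aq => /(_ isT).
by case/orP=> [/eqP ->|->]; rewrite ?eqxx ?orbT.
Qed.

Lemma dom_trans v u w : dom adj v u -> dom adj u w -> dom adj v w.
Proof.
move=> Hvu Huw; apply/subsetP => q; rewrite /st !inE => aq.
case/orP: (domP Huw aq) => [auq|/eqP Euq].
  by case/orP: (domP Hvu auq) => [->|/eqP ->]; rewrite ?eqxx ?orbT.
subst q.
have awv : adj u w by rewrite adj_sym.
case/orP: (domP Hvu awv) => [avw|/eqP Evw].
  have awv' : adj w v by rewrite adj_sym.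
  case/orP: (domP Huw awv') => [auv|/eqP ->]; last by rewrite eqxx.
  by rewrite adj_sym auv orbT.
subst w. by rewrite aq orbT.
Qed.

Lemma hom_lm v w : (forall q, adj v q -> okv w [:: (q, false)]) ->
  homv (letter_map (v, false) w).
Proof.
move=> H p q apq; rewrite /letter_map /=.
case: (eqVneq p v) => [Ep|np]; case: (eqVneq q v) => [Eq|nq].
- by subst; rewrite adj_irr in apq.
- subst p. exact: H.
- subst q. apply: okv_sym; apply: H; by rewrite adj_sym.
- by rewrite /okv /= apq.
Qed.

End Lib.

Section Main.
Variable X : finType.
Variable adj : rel X.
Hypothesis adj_sym : symmetric adj.
Hypothesis adj_irr : irreflexive adj.

Definition pinv (u v : X) : endo X := letter_map (v, false) [:: (u, false); (v, false); (u, true)].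

Definition taui (a b : X) : endo X := letter_map (b, false) [:: (b, false); (a, true)].

Ltac mkneq := repeat match goal with H : is_true (?p != ?q) |- _ =>
  let H1 := fresh "E" in let H2 := fresh "E" in
  pose proof (negbTE H) as H1;
  assert (H2 : (q == p) = false) by (rewrite eq_sym; exact (negbTE H));
  clear H end.
Ltac rwneq := repeat match goal with H : (_ == _) = false |- _ => progress rewrite H end.
Ltac cv := cbv [ecomp subst letter_map idE flatten foldr map cat winv rev catrev linv
  fst snd negb andb transv ctransv pconj pinv taui red rstep cancels].
Ltac crunch_loop := match goal with |- ?G => cv; rewrite ?eqxx; rwneq;
  match goal with |- ?G' => tryif constr_eq G G' then idtac else crunch_loop end end.
Ltac crunch := crunch_loop.

Lemma pconj_inv u v : u != v ->
  is_inv adj (pconj (u, false) (v, false)) (pinv u v).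
Proof.
move=> uv; split=> z; apply: red_eq; case: (eqVneq z v) => [->|zv].
all: mkneq; crunch; by [].
Qed.

Lemma Kct (Z : {set X}) p q r : p \in Z -> q \in Z -> r \in Z -> dom adj p r -> dom adj q r ->
  p != q -> p != r -> q != r -> K adj Z (ctransv (p, false) (q, false) (r, false)).
Proof.
move=> pZ qZ rZ dp dq pq pr qr; apply: gen_base; left; exists p, q, r; split.
- by rewrite pZ qZ rZ.
- by rewrite dp dq.
- by rewrite pq pr qr.
- by [].
Qed.

Lemma Kpc (Z : {set X}) u v : u \in Z -> v \in Z -> dom adj u v -> u != v ->
  K adj Z (pconj (u, false) (v, false)).
Proof. move=> uZ vZ d uv; apply: gen_base; right; left; by exists u, v. Qed.

Lemma Kpi (Z : {set X}) u v : u \in Z -> v \in Z -> dom adj u v -> u != v ->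
  K adj Z (pinv u v).
Proof. move=> uZ vZ d uv; exact: gen_inv (Kpc uZ vZ d uv) (pconj_inv uv). Qed.


Lemma hom_tau a b : dom adj a b -> homv adj (transv (a, false) (b, false)).
Proof.
move=> H; apply: (hom_lm adj_sym adj_irr) => q bq.
by rewrite /okv /= bq /= andbT (domP H bq).
Qed.

Lemma hom_taui a b : dom adj a b -> homv adj (taui a b).
Proof.
move=> H; apply: (hom_lm adj_sym adj_irr) => q bq.
by rewrite /okv /= bq /= andbT (domP H bq).
Qed.

Lemma hom_T x y c : dom adj x c -> dom adj y c ->
  homv adj (ctransv (x, false) (y, false) (c, false)).
Proof.
move=> Hx Hy; apply: (hom_lm adj_sym adj_irr) => q cq.
by rewrite /okv /= cq /= !andbT (domP Hx cq) (domP Hy cq).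
Qed.

Lemma replace_tinv a b c x y tinv : dom adj a b -> a != b -> dom adj x c -> dom adj y c ->
  is_inv adj (transv (a, false) (b, false)) tinv ->
  eeq adj (ecomp (transv (a, false) (b, false))
            (ecomp (ctransv (x, false) (y, false) (c, false)) tinv))
          (ecomp (transv (a, false) (b, false))
            (ecomp (ctransv (x, false) (y, false) (c, false)) (taui a b))).
Proof.
move=> Hab nab Hx Hy [H1 H2] z; rewrite /ecomp.
apply: (weq_subst adj_sym (hom_tau Hab)); apply: (weq_subst adj_sym (hom_T Hx Hy)).
have Hti : eeq adj (ecomp (taui a b) (transv (a, false) (b, false))) (@idE X).
  move=> w; apply: red_eq; case: (eqVneq w b) => [->|?]; mkneq; rewrite /taui; crunch; by [].
rewrite -[tinv z]subst_id.
apply: (weq_trans (subst_eeq adj_sym (tinv z) (eeq_sym Hti))).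
rewrite subst_comp -(subst1 (taui a b) z).
apply: (weq_subst adj_sym (hom_taui Hab)). exact: H1 z.
Qed.


Ltac eeqt b c := let z := fresh "z" in intro z; apply: red_eq;
  case: (eqVneq z b) => [->|?]; [|case: (eqVneq z c) => [->|?]];
  mkneq; rewrite /taui; crunch; by [].
Ltac symneq := repeat match goal with H : is_true (?p != ?q) |- _ =>
  lazymatch goal with
  | _ : is_true (q != p) |- _ => fail
  | _ => let H' := fresh "N" in assert (H' : q != p) by (rewrite eq_sym; exact H)
  end end.
Ltac inZ := rewrite !inE ?eqxx ?orbT.

Lemma case1 a c x y : dom adj a c -> a != c -> dom adj x c -> x != c -> dom adj y c -> y != c -> x != y ->
  K adj [set a; c; c; x; y]
    (ecomp (transv (a, false) (c, false))
       (ecomp (ctransv (x, false) (y, false) (c, false)) (taui a c))).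
Proof.
move=> Hac nac Hxc nxc Hyc nyc nxy.
apply: (gen_eeq (f := ecomp (pconj (a,false) (c,false))
   (ecomp (ctransv (x, false) (y, false) (c, false)) (pinv a c)))).
  apply: gen_comp; first by apply: Kpc => //; inZ.
  apply: gen_comp; first by apply: Kct => //; inZ.
  by apply: Kpi => //; inZ.
eeqt c c.
Qed.

Lemma case2a b c x y : dom adj c b -> c != b -> b != x -> b != y ->
  dom adj x c -> x != c -> dom adj y c -> y != c -> x != y ->
  K adj [set c; b; c; x; y]
    (ecomp (transv (c, false) (b, false))
       (ecomp (ctransv (x, false) (y, false) (c, false)) (taui c b))).
Proof.
move=> H1 H2 H3 H4 Hxc nxc Hyc nyc nxy.
have Hyb := dom_trans adj_sym Hyc H1. have Hxb := dom_trans adj_sym Hxc H1.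
symneq.
apply: (gen_eeq (f := (ecomp (ctransv (x,false) (y,false) (c,false)) (ecomp (pconj (c,false) (b,false)) (ecomp (ctransv (y,false) (x,false) (b,false)) (pinv c b)))))).
  apply: gen_comp; first by apply: Kct => //; inZ.
  apply: gen_comp; first by apply: Kpc => //; inZ.
  apply: gen_comp; first by apply: Kct => //; inZ.
  by apply: Kpi => //; inZ.
eeqt b c.
Qed.

Lemma case2b a b c x y : dom adj a b -> a != b -> a != c -> b != c -> b != x -> b != y ->
  dom adj x c -> x != c -> dom adj y c -> y != c -> x != y ->
  K adj [set a; b; c; x; y]
    (ecomp (transv (a, false) (b, false))
       (ecomp (ctransv (x, false) (y, false) (c, false)) (taui a b))).
Proof.
move=> H1 H2 H3 H4 H5 H6 Hxc nxc Hyc nyc nxy.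

symneq.
apply: (gen_eeq (f := (ctransv (x,false) (y,false) (c,false)))).
  by apply: Kct => //; inZ.
eeqt b c.
Qed.

Lemma case3a c x y : dom adj c x ->
  dom adj x c -> x != c -> dom adj y c -> y != c -> x != y ->
  K adj [set c; x; c; x; y]
    (ecomp (transv (c, false) (x, false))
       (ecomp (ctransv (x, false) (y, false) (c, false)) (taui c x))).
Proof.
move=> H1 Hxc nxc Hyc nyc nxy.
have Hyx := dom_trans adj_sym Hyc H1.
symneq.
apply: (gen_eeq (f := (ecomp (pconj (c,false) (x,false)) (ecomp (pconj (x,false) (c,false)) (ecomp (pinv y x) (ecomp (ctransv (y,false) (c,false) (x,false)) (ecomp (pinv x c) (ecomp (ctransv (x,false) (y,false) (c,false)) (ecomp (pconj (y,false) (c,false)) (pinv c x)))))))))).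
  apply: gen_comp; first by apply: Kpc => //; inZ.
  apply: gen_comp; first by apply: Kpc => //; inZ.
  apply: gen_comp; first by apply: Kpi => //; inZ.
  apply: gen_comp; first by apply: Kct => //; inZ.
  apply: gen_comp; first by apply: Kpi => //; inZ.
  apply: gen_comp; first by apply: Kct => //; inZ.
  apply: gen_comp; first by apply: Kpc => //; inZ.
  by apply: Kpi => //; inZ.
eeqt x c.
Qed.

Lemma case3b c x y : dom adj y x ->
  dom adj x c -> x != c -> dom adj y c -> y != c -> x != y ->
  K adj [set y; x; c; x; y]
    (ecomp (transv (y, false) (x, false))
       (ecomp (ctransv (x, false) (y, false) (c, false)) (taui y x))).
Proof.
move=> H1 Hxc nxc Hyc nyc nxy.

symneq.
apply: (gen_eeq (f := (ctransv (x,false) (y,false) (c,false)))).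
  by apply: Kct => //; inZ.
eeqt x c.
Qed.

Lemma case3c a c x y : dom adj a x -> a != x -> a != c -> a != y ->
  dom adj x c -> x != c -> dom adj y c -> y != c -> x != y ->
  K adj [set a; x; c; x; y]
    (ecomp (transv (a, false) (x, false))
       (ecomp (ctransv (x, false) (y, false) (c, false)) (taui a x))).
Proof.
move=> H1 H2 H3 H4 Hxc nxc Hyc nyc nxy.
have Hac := dom_trans adj_sym H1 Hxc.
symneq.
apply: (gen_eeq (f := (ecomp (pconj (x,false) (c,false)) (ecomp (ctransv (a,false) (y,false) (c,false)) (ecomp (pinv x c) (ctransv (x,false) (y,false) (c,false))))))).
  apply: gen_comp; first by apply: Kpc => //; inZ.
  apply: gen_comp; first by apply: Kct => //; inZ.
  apply: gen_comp; first by apply: Kpi => //; inZ.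
  by apply: Kct => //; inZ.
eeqt x c.
Qed.

Lemma case4a c x y : dom adj c y ->
  dom adj x c -> x != c -> dom adj y c -> y != c -> x != y ->
  K adj [set c; y; c; x; y]
    (ecomp (transv (c, false) (y, false))
       (ecomp (ctransv (x, false) (y, false) (c, false)) (taui c y))).
Proof.
move=> H1 Hxc nxc Hyc nyc nxy.
have Hxy := dom_trans adj_sym Hxc H1.
symneq.
apply: (gen_eeq (f := (ecomp (pconj (c,false) (y,false)) (ecomp (pconj (x,false) (y,false)) (ecomp (ctransv (x,false) (y,false) (c,false)) (ecomp (pconj (y,false) (c,false)) (ecomp (ctransv (c,false) (x,false) (y,false)) (ecomp (pinv x c) (ecomp (pinv y c) (pinv c y)))))))))).
  apply: gen_comp; first by apply: Kpc => //; inZ.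
  apply: gen_comp; first by apply: Kpc => //; inZ.
  apply: gen_comp; first by apply: Kct => //; inZ.
  apply: gen_comp; first by apply: Kpc => //; inZ.
  apply: gen_comp; first by apply: Kct => //; inZ.
  apply: gen_comp; first by apply: Kpi => //; inZ.
  apply: gen_comp; first by apply: Kpi => //; inZ.
  by apply: Kpi => //; inZ.
eeqt y c.
Qed.

Lemma case4b c x y : dom adj x y ->
  dom adj x c -> x != c -> dom adj y c -> y != c -> x != y ->
  K adj [set x; y; c; x; y]
    (ecomp (transv (x, false) (y, false))
       (ecomp (ctransv (x, false) (y, false) (c, false)) (taui x y))).
Proof.
move=> H1 Hxc nxc Hyc nyc nxy.

symneq.
apply: (gen_eeq (f := (ctransv (x,false) (y,false) (c,false)))).
  by apply: Kct => //; inZ.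
eeqt y c.
Qed.

Lemma case4c a c x y : dom adj a y -> a != y -> a != c -> a != x ->
  dom adj x c -> x != c -> dom adj y c -> y != c -> x != y ->
  K adj [set a; y; c; x; y]
    (ecomp (transv (a, false) (y, false))
       (ecomp (ctransv (x, false) (y, false) (c, false)) (taui a y))).
Proof.
move=> H1 H2 H3 H4 Hxc nxc Hyc nyc nxy.
have Hac := dom_trans adj_sym H1 Hyc.
symneq.
apply: (gen_eeq (f := (ecomp (ctransv (x,false) (y,false) (c,false)) (ecomp (pconj (y,false) (c,false)) (ecomp (ctransv (x,false) (a,false) (c,false)) (pinv y c)))))).
  apply: gen_comp; first by apply: Kct => //; inZ.
  apply: gen_comp; first by apply: Kpc => //; inZ.
  apply: gen_comp; first by apply: Kct => //; inZ.
  by apply: Kpi => //; inZ.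
eeqt y c.
Qed.

Lemma main_explicit a b c x y : dom adj a b -> a != b -> dom adj x c -> x != c ->
  dom adj y c -> y != c -> x != y ->
  K adj [set a; b; c; x; y]
    (ecomp (transv (a, false) (b, false))
       (ecomp (ctransv (x, false) (y, false) (c, false)) (taui a b))).
Proof.
move=> Hab nab Hxc nxc Hyc nyc nxy.
case: (eqVneq b c) => [Ebc|nbc].
  subst b. by apply: case1.
case: (eqVneq b x) => [Ebx|nbx].
  subst b. case: (eqVneq a c) => [Eac|nac].
    subst a. by apply: case3a.
  case: (eqVneq a y) => [Eay|nay].
    subst a. by apply: case3b.
  by apply: case3c.
case: (eqVneq b y) => [Eby|nby].
  subst b. case: (eqVneq a c) => [Eac|nac].
    subst a. by apply: case4a.
  case: (eqVneq a x) => [Eax|nax].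
    subst a. by apply: case4b.
  by apply: case4c.
case: (eqVneq a c) => [Eac|nac].
  subst a. by apply: case2a.
by apply: case2b.
Qed.

Lemma final a b c x y : dom adj a b -> a != b -> dom adj x c -> x != c -> dom adj y c -> y != c -> x != y ->
  forall tinv : endo X,
    is_inv adj (transv (a, false) (b, false)) tinv ->
    K adj [set a; b; c; x; y]
      (ecomp (transv (a, false) (b, false))
            (ecomp (ctransv (x, false) (y, false) (c, false)) tinv)).
Proof.
move=> Hab nab Hxc nxc Hyc nyc nxy tinv Hinv.
apply: (gen_eeq (main_explicit Hab nab Hxc nxc Hyc nyc nxy)).
exact: eeq_sym (replace_tinv Hab nab Hxc Hyc Hinv).
Qed.

End Main.

Theorem mainTheorem4 (X : finType) (adj : rel X)
  (adj_sym : symmetric adj) (adj_irr : irreflexive adj)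
  (a b c x y : X) :
  dom adj a b -> a != b -> dom adj x c -> x != c -> dom adj y c -> y != c -> x != y ->
  forall tinv : endo X,
    is_inv adj (transv (a, false) (b, false)) tinv ->
    K adj [set a; b; c; x; y]
      (ecomp (transv (a, false) (b, false))
            (ecomp (ctransv (x, false) (y, false) (c, false)) tinv)).
Proof. exact: (final adj_sym adj_irr). Qed.
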